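(* Let $G$ be a graph with a linear order $<$ on $V(G)$ satisfying the X-property, and let $s<t$ be vertices with $\operatorname{dist}(s,t)<\infty$. If a shortest $s$-$t$ path $P$ contains two edges $\{v,v'\}$ and $\{w,w'\}$ with $v<w<v'<w'$, then $P$ also contains the edge $\{v,w'\}$; moreover, this is the only pair of crossing edges in $P$, and every vertex $x$ of $P$ satisfies $v\le x\le w'$.
   Context: The X-property: for all vertices $p<q<r<s$, if $\{p,r\}\in E(G)$ and $\{q,s\}\in E(G)$ then $\{p,s\}\in E(G)$. $\operatorname{dist}(s,t)$ is the number of edges of a shortest $s$-$t$ path. Two edges $\{a,b\}$ and $\{c,d\}$ with $a<b$, $c<d$ are crossing if $a<c<b<d$ or $c<a<d<b$. *)

(* Defs.v *)
From HB Require Import structures.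
From mathcomp Require Import all_boot all_order.
Set Implicit Arguments. Unset Strict Implicit. Unset Printing Implicit Defensive.
Import Order.TTheory.
Local Open Scope order_scope.

(* A graph on a finite linearly ordered vertex set T: an adjacency relation e,
   assumed symmetric and irreflexive (simple undirected graph). *)

Definition X_property (d : Order.disp_t) (T : finOrderType d) (e : rel T) : Prop :=
  forall p q r s : T, p < q -> q < r -> r < s -> e p r -> e q s -> e p s.

Definition walk (d : Order.disp_t) (T : finOrderType d) (e : rel T) (s t : T) (p : seq T) : bool :=
  path e s p && (last s p == t).

(* A shortest s-t path: a walk from s to t of minimal length (size p = dist(s,t)). *)
Definition shortest_path (d : Order.disp_t) (T : finOrderType d) (e : rel T) (s t : T) (p : seq T) : Prop :=
  walk e s t p /\ forall p' : seq T, walk e s t p' -> size p <= size p'.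

Definition path_has_edge (T : eqType) (q : seq T) (a b : T) : bool :=
  ((a, b) \in zip q (behead q)) || ((b, a) \in zip q (behead q)).

Definition crossing (d0 : Order.disp_t) (T : finOrderType d0) (a b c d : T) : bool :=
  [&& a < c, c < b & b < d] || [&& c < a, a < d & d < b].

(* Main.v *)
Require Import Defs.
From HB Require Import structures.
From mathcomp Require Import all_boot all_order.
From mathcomp Require Import zify.
Import Order.TTheory.
Set Implicit Arguments. Unset Strict Implicit.

Definition xx {T : Type} (s : T) (P : seq T) (i : nat) := nth s (s :: P) i.

Lemma edge_at (T : Type) (e : rel T) s P i :
  path e s P -> i < size P -> e (xx s P i) (xx s P i.+1).
Proof. by move=> /(pathP s) H /H. Qed.

Lemma last_take_xx (T : Type) (s : T) P i :
  i <= size P -> last s (take i P) = xx s P i.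
Proof.
case: i => [|i] Hi; first by rewrite take0.
by rewrite (last_nth s) size_takel //= nth_take.
Qed.

Lemma shortcut d (T : finOrderType d) (e : rel T) s t P i k :
  shortest_path e s t P -> i < k -> k < size P ->
  e (xx s P i) (xx s P k.+1) -> False.
Proof.
move=> [/andP [hp /eqP hl] hmin] hik hk he.
pose P' := take i P ++ drop k P.
have hpi : path e s (take i P) by apply: take_path.
have [hpk hlk] : path e (xx s P k.+1) (drop k.+1 P) /\ last (xx s P k.+1) (drop k.+1 P) = t.
  move: hp hl; rewrite -{1 2}(cat_take_drop k.+1 P) cat_path last_cat.
  by rewrite last_take_xx // => /andP [_ ->] ->.
have hw : walk e s t P'.
  rewrite /walk /P' cat_path last_cat last_take_xx; last by lia.
  by rewrite (drop_nth s) //= hpi he hpk hlk eqxx.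
have := hmin _ hw; rewrite size_cat size_takel ?size_drop; lia.
Qed.

Lemma far d (T : finOrderType d) (e : rel T) s t P p r :
  symmetric e -> shortest_path e s t P -> p <= size P -> r <= size P ->
  (p.+2 <= r \/ r.+2 <= p) -> ~~ e (xx s P p) (xx s P r).
Proof.
move=> es hP hp hr [h|h]; apply/negP => he.
- case: r hr h he => [|r] hr h he; first lia.
  by apply: (shortcut hP _ _ he); lia.
- rewrite es in he.
  case: p hp h he => [|p] hp h he; first lia.
  by apply: (shortcut hP _ _ he); lia.
Qed.

Lemma inj d (T : finOrderType d) (e : rel T) s t P i j :
  symmetric e -> shortest_path e s t P -> i < j -> j <= size P ->
  xx s P i = xx s P j -> False.
Proof.
move=> es hP hij hj E.
have [hP1 hmin] := hP; move: hP1 => /andP [hp /eqP hl].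
case: (ltnP j (size P)) => hj2.
  have := edge_at hp hj2; rewrite -E => he.
  have h := far es hP (p:=i) (r:=j.+1).
  have : i <= size P by lia.
  move=> h1. have h2 : j.+1 <= size P by lia. have h3 : (i.+2 <= j.+1 \/ (j.+1).+2 <= i) by lia.
  by move/negP: (h h1 h2 h3).
have hw : walk e s t (take i P).
  rewrite /walk take_path // last_take_xx; last by lia.
  have ej : j = size P by lia.
  by rewrite E ej -hl (last_nth s) /xx eqxx.
have := hmin _ hw; rewrite size_takel; lia.
Qed.

Lemma idx_eq d (T : finOrderType d) (e : rel T) s t P p r :
  symmetric e -> shortest_path e s t P -> p <= size P -> r <= size P ->
  xx s P p = xx s P r -> p = r.
Proof.
move=> es hP hp hr E; case: (ltngtP p r) => // h.
- by case: (inj es hP h hr E).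
- by case: (inj es hP h hp (esym E)).
Qed.


Ltac prune := repeat match goal with
  | H : context [Order.lt] |- _ => clear H
  | H : context [Order.le] |- _ => clear H
  | H : context [xx] |- _ => clear H
  | H : shortest_path _ _ _ _ |- _ => clear H
  | H : path _ _ _ |- _ => clear H
  | H : X_property _ |- _ => clear H
  | H : symmetric _ |- _ => clear H
  | H : is_true (path_has_edge _ _ _) |- _ => clear H
  end.
Ltac plia := prune; lia.
Lemma phe_dec (T : eqType) (s : T) P a b :
  path_has_edge (s :: P) a b -> exists i, i < size P /\
    ((xx s P i = a /\ xx s P i.+1 = b) \/ (xx s P i = b /\ xx s P i.+1 = a)).
Proof.
have hz : size (zip (s :: P) P) = size P by rewrite size_zip /=; lia.
rewrite /path_has_edge /= => /orP [] /(nthP (s, s)) [i]; rewrite hz => hi;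
  rewrite nth_zip_cond hz hi => -[ha hb]; exists i; split => //.
- by left.
- by right.
Qed.

Lemma edge_phe (T : eqType) (s : T) P i :
  i < size P -> path_has_edge (s :: P) (xx s P i) (xx s P i.+1).
Proof.
have hz : size (zip (s :: P) P) = size P by rewrite size_zip /=; lia.
move=> hi; rewrite /path_has_edge /=; apply/orP; left; apply/(nthP (s, s)).
by exists i; rewrite ?nth_zip_cond /= ?hz ?hi.
Qed.

Lemma phe_sym (T : eqType) (q : seq T) a b :
  path_has_edge q a b = path_has_edge q b a.
Proof. by rewrite /path_has_edge orbC. Qed.

Lemma phe_idx (T : eqType) (s : T) P a b :
  path_has_edge (s :: P) a b -> exists ia ib, [/\ ia <= size P, ib <= size P,
    xx s P ia = a, xx s P ib = b & (ib = ia.+1 \/ ia = ib.+1)].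
Proof.
move=> /phe_dec [i [hi [[ha hb]|[ha hb]]]].
- by exists i, i.+1; split => //; try lia; left.
- by exists i.+1, i; split => //; try lia; right.
Qed.

Lemma phe_e (T : eqType) (e : rel T) (s : T) P a b :
  symmetric e -> path e s P -> path_has_edge (s :: P) a b -> e a b.
Proof.
move=> es hp /phe_dec [i [hi [[<- <-]|[<- <-]]]]; first exact: edge_at.
by rewrite es; apply: edge_at.
Qed.

Lemma step d (T : finOrderType d) (e : rel T) u u' y z :
  symmetric e -> X_property e ->
  (u < y)%O -> (y < u')%O -> e y z -> e u u' -> z != u -> z != u' ->
  ~~ e z u' -> ~~ e u z -> (u < z)%O && (z < u')%O.
Proof.
move=> es hX h1 h2 eyz euu zu zu' n1 n2.
case: (ltgtP z u) => hzu.
- by move: n1; rewrite (hX z u y u' hzu h1 h2 _ euu) // es.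
- case: (ltgtP z u') => hzu'; first done.
  + by move: n2; rewrite (hX u y u' z h1 h2 hzu' euu eyz).
  + by move: zu'; rewrite hzu' eqxx.
- by move: zu; rewrite hzu eqxx.
Qed.

Lemma stay_fwd d (T : finOrderType d) (e : rel T) s t P u u' iu iu' j :
  symmetric e -> X_property e -> shortest_path e s t P ->
  e u u' -> iu <= size P -> iu' <= size P ->
  xx s P iu = u -> xx s P iu' = u' -> iu.+2 <= j -> iu'.+2 <= j ->
  j <= size P -> (u < xx s P j)%O -> (xx s P j < u')%O ->
  forall l, j <= l -> l <= size P -> (u < xx s P l)%O && (xx s P l < u')%O.
Proof.
move=> es hX hP euu hiu hiu' Hu Hu' h1 h2 hj hj1 hj2.
have hp : path e s P by case: hP => /andP [].
suff H : forall k, j + k <= size P -> (u < xx s P (j + k))%O && (xx s P (j + k) < u')%O.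
  by move=> l hl1 hl2; have := H (l - j); rewrite subnKC //; apply.
elim => [|k IH] hk; first by rewrite addn0 hj1 hj2.
have /andP [y1 y2] := IH ltac:(plia).
have eyz : e (xx s P (j + k)) (xx s P (j + k.+1)).
  by rewrite addnS; apply: edge_at => //; plia.
apply: (step es hX y1 y2 eyz euu).
- apply/eqP => E; apply: (inj es hP (i:=iu) (j:=j + k.+1)); try plia.
  by rewrite Hu E.
- apply/eqP => E; apply: (inj es hP (i:=iu') (j:=j + k.+1)); try plia.
  by rewrite Hu' E.
- by rewrite -Hu'; apply: (far es hP); plia.
- by rewrite -Hu; apply: (far es hP); plia.
Qed.

Lemma stay_bwd d (T : finOrderType d) (e : rel T) s t P u u' iu iu' j :
  symmetric e -> X_property e -> shortest_path e s t P ->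
  e u u' -> iu <= size P -> iu' <= size P ->
  xx s P iu = u -> xx s P iu' = u' -> j.+2 <= iu -> j.+2 <= iu' ->
  (u < xx s P j)%O -> (xx s P j < u')%O ->
  forall l, l <= j -> (u < xx s P l)%O && (xx s P l < u')%O.
Proof.
move=> es hX hP euu hiu hiu' Hu Hu' h1 h2 hj1 hj2.
have hp : path e s P by case: hP => /andP [].
suff H : forall k, k <= j -> (u < xx s P (j - k))%O && (xx s P (j - k) < u')%O.
  by move=> l hl; have := H (j - l); rewrite subKn //; apply; plia.
elim => [|k IH] hk; first by rewrite subn0 hj1 hj2.
have /andP [y1 y2] := IH ltac:(plia).
have eyz : e (xx s P (j - k)) (xx s P (j - k.+1)).
  rewrite es (_ : j - k = (j - k.+1).+1); last plia.
  by apply: edge_at => //; plia.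
apply: (step es hX y1 y2 eyz euu).
- apply/eqP => E; apply: (inj es hP (i:=j - k.+1) (j:=iu)); try plia.
  by rewrite Hu E.
- apply/eqP => E; apply: (inj es hP (i:=j - k.+1) (j:=iu')); try plia.
  by rewrite Hu' E.
- by rewrite -Hu'; apply: (far es hP); plia.
- by rewrite -Hu; apply: (far es hP); plia.
Qed.

Lemma cross_idx d (T : finOrderType d) (e : rel T) s t P a b c d0 :
  symmetric e -> X_property e -> shortest_path e s t P ->
  (a < c)%O -> (c < b)%O -> (b < d0)%O ->
  path_has_edge (s :: P) a b -> path_has_edge (s :: P) c d0 ->
  exists ia ib ic id, [/\ [/\ ia <= size P, ib <= size P, ic <= size P & id <= size P],
    [/\ xx s P ia = a, xx s P ib = b, xx s P ic = c & xx s P id = d0] &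
    ((ib.+1 = ia /\ ia.+1 = id /\ id.+1 = ic) \/
     (ic.+1 = id /\ id.+1 = ia /\ ia.+1 = ib))].
Proof.
move=> es hX hP hac hcb hbd hab hcd.
have hp : path e s P by case: hP => /andP [].
have [ia [ib [hia hib Ha Hb Hiab]]] := phe_idx hab.
have [ic [id [hic hid Hc Hd Hicd]]] := phe_idx hcd.
have ead : e a d0 := hX a c b d0 hac hcb hbd (phe_e es hp hab) (phe_e es hp hcd).
have nad : ia <> id.
  by move=> E; move: (lt_trans hac (lt_trans hcb hbd)); rewrite -Ha -Hd E ltxx.
have nbd : ib <> id.
  by move=> E; move: hbd; rewrite -Hb -Hd E ltxx.
have nca : ic <> ia.
  by move=> E; move: hac; rewrite -Ha -Hc E ltxx.
have nbc : ib <> ic.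
  by move=> E; move: hcb; rewrite -Hb -Hc E ltxx.
have hfar : ~ (ia.+2 <= id \/ id.+2 <= ia).
  by move=> h; move: (far es hP hia hid h); rewrite Ha Hd ead.
exists ia, ib, ic, id; split => //; plia.
Qed.

Lemma range d (T : finOrderType d) (e : rel T) s t P a b c d0 :
  symmetric e -> X_property e -> shortest_path e s t P ->
  (a < c)%O -> (c < b)%O -> (b < d0)%O ->
  path_has_edge (s :: P) a b -> path_has_edge (s :: P) c d0 ->
  forall l, l <= size P -> (a <= xx s P l)%O && (xx s P l <= d0)%O.
Proof.
move=> es hX hP hac hcb hbd hab hcd l hl.
have hp : path e s P by case: hP => /andP [].
have eab := phe_e es hp hab; have ecd := phe_e es hp hcd.
have [ia [ib [ic [id [[hia hib hic hid] [Ha Hb Hc Hd] H]]]]] :=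
  cross_idx es hX hP hac hcb hbd hab hcd.
have hab' : (a < b)%O := lt_trans hac hcb.
have hcd' : (c < d0)%O := lt_trans hcb hbd.
have had : (a < d0)%O := lt_trans hab' hbd.
case: H => [[E1 [E2 E3]]|[E1 [E2 E3]]].
- have [h|h] : l <= ib \/ ib < l by plia.
    have /andP [h1 h2] := stay_bwd (j:=ib) es hX hP ecd hic hid Hc Hd
      ltac:(plia) ltac:(plia) ltac:(by rewrite Hb) ltac:(by rewrite Hb) h.
    by rewrite (ltW h2) (ltW (lt_trans hac h1)).
  have [h'|h'] : l <= id \/ ic <= l by plia.
    have [->|->] : l = ia \/ l = id by plia.
      by rewrite Ha lexx (ltW had).
    by rewrite Hd lexx (ltW had).
  have /andP [h1 h2] := stay_fwd (j:=ic) es hX hP eab hia hib Ha Hb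
      ltac:(plia) ltac:(plia) hic ltac:(by rewrite Hc) ltac:(by rewrite Hc) h' hl.
  by rewrite (ltW h1) (ltW (lt_trans h2 hbd)).
- have [h|h] : l <= ic \/ ic < l by plia.
    have /andP [h1 h2] := stay_bwd (j:=ic) es hX hP eab hia hib Ha Hb
      ltac:(plia) ltac:(plia) ltac:(by rewrite Hc) ltac:(by rewrite Hc) h.
    by rewrite (ltW h1) (ltW (lt_trans h2 hbd)).
  have [h'|h'] : l <= ia \/ ib <= l by plia.
    have [->|->] : l = ia \/ l = id by plia.
      by rewrite Ha lexx (ltW had).
    by rewrite Hd lexx (ltW had).
  have /andP [h1 h2] := stay_fwd (j:=ib) es hX hP ecd hic hid Hc Hd
      ltac:(plia) ltac:(plia) hib ltac:(by rewrite Hb) ltac:(by rewrite Hb) h' hl.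
  by rewrite (ltW h2) (ltW (lt_trans hac h1)).
Qed.

Lemma uniq_cross dd (T : finOrderType dd) (e : rel T) s t P a b c d v v' w w' :
  symmetric e -> X_property e -> shortest_path e s t P ->
  (a < c)%O -> (c < b)%O -> (b < d)%O ->
  path_has_edge (s :: P) a b -> path_has_edge (s :: P) c d ->
  (v < w)%O -> (w < v')%O -> (v' < w')%O ->
  path_has_edge (s :: P) v v' -> path_has_edge (s :: P) w w' ->
  (a, b) = (v, v') /\ (c, d) = (w, w').
Proof.
move=> es hX hP hac hcb hbd hab hcd hvw hwv hvw' hvv hww.
have [ia [ib [ic [id [[hia hib hic hid] [Ha Hb Hc Hd] H]]]]] :=
  cross_idx es hX hP hac hcb hbd hab hcd.
have [ja [jb [jc [jd [[hja hjb hjc hjd] [Ja Jb Jc Jd] J]]]]] :=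
  cross_idx es hX hP hvw hwv hvw' hvv hww.
have R1 := range es hX hP hac hcb hbd hab hcd.
have R2 := range es hX hP hvw hwv hvw' hvv hww.
have /andP [r1 _] := R1 _ hja; have /andP [_ r2] := R1 _ hjd.
have /andP [r3 _] := R2 _ hia; have /andP [_ r4] := R2 _ hid.
rewrite Ja in r1; rewrite Jd in r2; rewrite Ha in r3; rewrite Hd in r4.
have Eav : a = v by apply/eqP; rewrite eq_le r1 r3.
have Edw : d = w' by apply/eqP; rewrite eq_le r2 r4.
have Ei1 : ia = ja by apply: (idx_eq es hP) => //; rewrite Ha Ja.
have Ei2 : id = jd by apply: (idx_eq es hP) => //; rewrite Hd Jd.
have Ei3 : ib = jb by plia.
have Ei4 : ic = jc by plia.
by rewrite -Ha -Hb -Hc -Hd -Ja -Jb -Jc -Jd Ei1 Ei2 Ei3 Ei4.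
Qed.

Local Open Scope order_scope.

Theorem lemma6 (d : Order.disp_t) (T : finOrderType d) (e : rel T)
  (e_sym : symmetric e) (e_irr : irreflexive e) (hX : X_property e)
  (s t : T) (hst : s < t) (P : seq T) (hP : shortest_path e s t P)
  (v v' w w' : T)
  (hvv' : path_has_edge (s :: P) v v') (hww' : path_has_edge (s :: P) w w')
  (h1 : v < w) (h2 : w < v') (h3 : v' < w') :
  [/\ path_has_edge (s :: P) v w',
      (forall a b c d0 : T, a < b -> c < d0 ->
         path_has_edge (s :: P) a b -> path_has_edge (s :: P) c d0 ->
         crossing a b c d0 ->
         ((a, b) = (v, v') /\ (c, d0) = (w, w')) \/
         ((a, b) = (w, w') /\ (c, d0) = (v, v')))
    & forall x : T, x \in s :: P -> v <= x <= w'].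
Proof.
have hp : path e s P by case: hP => /andP [].
have [ia [ib [ic [id [[hia hib hic hid] [Ha Hb Hc Hd] H]]]]] :=
  cross_idx e_sym hX hP h1 h2 h3 hvv' hww'.
split.
- case: H => [[E1 [E2 E3]]|[E1 [E2 E3]]].
  + by rewrite -Ha -Hd -E2; apply: edge_phe; rewrite -E2 in hid.
  + by rewrite phe_sym -Ha -Hd -E2; apply: edge_phe; rewrite -E2 in hia.
- move=> a b c d0 hab hcd pab pcd /orP [/and3P [x1 x2 x3]|/and3P [x1 x2 x3]].
  + by left; apply: (uniq_cross e_sym hX hP x1 x2 x3 pab pcd h1 h2 h3 hvv' hww').
  + by right; have [? ?] := uniq_cross e_sym hX hP x1 x2 x3 pcd pab h1 h2 h3 hvv' hww'.
- move=> x /(nthP s) [l hl <-].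
  by apply: (range e_sym hX hP h1 h2 h3 hvv' hww'); rewrite /= ltnS in hl.
Qed.
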